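(* Let $\mathcal{G}$ be an unambiguous weighted context-free grammar with positive weight vector $\omega$, generating $\mathcal{L}$, and let $n\ge0$. Let $P_{n,\omega,k}\in[0,1]$ be the total probability (under the $\omega$-weighted distribution on $\mathcal{L}_n$) of the set of distinct words obtained after $k$ independent draws from that distribution. Then \[ E[P_{n,\omega,k}]=\sum_{i=1}^{|\mathbf{W}_n|} M_{n,i}\,\frac{W_{n,i}}{Z_\omega(n)}\left(1-\left(1-\frac{W_{n,i}}{Z_\omega(n)}\right)^k\right). \] Moreover, if Condition C1 holds, then there exists $\beta>1$ such that for any $k\in o(\beta^n)$, \[ E[P_{n,\omega,k}]=k\,\alpha_{2,n}\left(1+O(\beta^{-n})\right). \]
   Context: A weighted context-free grammar is an unambiguous context-free grammar with terminal alphabet $\Sigma$ and positive weights $\omega=(\omega_t)_{t\in\Sigma}$; $\mathcal{L}_n$ is the set of generated words of length $n$. The weight $\omega(w)$ of a word is the product of its letters' weights (with multiplicity); $Z_\omega(n)=\sum_{w\in\mathcal{L}_n}\omega(w)$, and the $\omega$-weighted distribution gives $w$ probability $\omega(w)/Z_\omega(n)$. $\mathbf{W}_n=(W_{n,1}<W_{n,2}<\dots)$ is the increasingly ordered vector of distinct weights of words in $\mathcal{L}_n$ and $M_{n,i}$ the number of words of weight $W_{n,i}$. $\alpha_{2,n}=\sum_{w\in\mathcal{L}_n}(\omega(w)/Z_\omega(n))^2$. Condition C1: there exists $\beta>1$ such that $\max_{w\in\mathcal{L}_n}\omega(w)/Z_\omega(n)\in O(\beta^{-n})$. *)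

(* Defs.v *)
From mathcomp Require Import all_boot all_order all_algebra.
From mathcomp Require Import boolp.
Set Implicit Arguments. Unset Strict Implicit. Unset Printing Implicit Defensive.
Import Order.TTheory GRing.Theory Num.Theory.
Local Open Scope ring_scope.

(* Terminal alphabet Sig, nonterminals N (both finite). A rule X -> s is a pair
   (X, s) with s a sequence of terminals (inl) and nonterminals (inr). *)
Record cfg (Sig N : finType) := CFG {
  cfg_start : N;
  cfg_rules : seq (N * seq (Sig + N))
}.

Inductive dtree (Sig N : Type) :=
| DLeaf of Sig
| DNode of N & seq (dtree Sig N).

Section Grammar.
Variables (Sig N : finType) (G : cfg Sig N).

Definition droot (t : dtree Sig N) : Sig + N :=
  match t with DLeaf a => inl a | DNode X _ => inr X end.

Fixpoint dyield (t : dtree Sig N) : seq Sig :=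
  match t with
  | DLeaf a => [:: a]
  | DNode _ ts => flatten (map dyield ts)
  end.

Fixpoint dvalid (t : dtree Sig N) : Prop :=
  match t with
  | DLeaf _ => True
  | DNode X ts =>
      (X, map droot ts) \in cfg_rules G /\ foldr (fun u P => dvalid u /\ P) True ts
  end.

Definition full_tree (t : dtree Sig N) : Prop :=
  droot t = inr (cfg_start G) /\ dvalid t.

Definition generates (w : seq Sig) : Prop :=
  exists t, full_tree t /\ dyield t = w.

Definition unambiguous : Prop :=
  forall t1 t2, full_tree t1 -> full_tree t2 -> dyield t1 = dyield t2 -> t1 = t2.

Definition Lang (n : nat) : {set n.-tuple Sig} :=
  [set w : n.-tuple Sig | `[< generates (tval w) >]].
End Grammar.

Section Weighted.
Variables (R : realFieldType) (Sig N : finType) (G : cfg Sig N) (om : Sig -> R).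

Definition wword (n : nat) (w : n.-tuple Sig) : R := \prod_(a <- w) om a.
Arguments wword : clear implicits.

Definition Zw (n : nat) : R := \sum_(w in Lang G n) wword n w.

Definition prob (n : nat) (w : n.-tuple Sig) : R := wword n w / Zw n.
Arguments prob : clear implicits.

Definition Wvec (n : nat) : seq R :=
  sort <=%R (undup [seq wword n w | w <- enum (Lang G n)]).

(* M_{n,i} : number of words of L_n with weight W_{n,i} (0-based index i) *)
Definition Mcount (n i : nat) : nat :=
  #|[set w in Lang G n | wword n w == nth 0 (Wvec n) i]|.

Definition alpha2 (n : nat) : R := \sum_(w in Lang G n) prob n w ^+ 2.

(* max_{w in L_n} omega(w)/Z_omega(n) (0 if L_n is empty) *)
Definition maxprob (n : nat) : R := \big[Num.max/0]_(w in Lang G n) prob n w.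

(* E[P_{n,omega,k}]: k independent draws s(0),...,s(k-1) from the weighted
   distribution on L_n; P = total probability of the set of distinct words drawn. *)
Definition covered (n k : nat) (s : {ffun 'I_k -> n.-tuple Sig}) : R :=
  \sum_(w in Lang G n | [exists i, s i == w]) prob n w.

Definition EP (n k : nat) : R :=
  \sum_(s : {ffun 'I_k -> n.-tuple Sig} | [forall i, s i \in Lang G n])
     (\prod_(i < k) prob n (s i)) * covered s.

Definition condC1 : Prop :=
  exists beta : R, 1 < beta /\
    exists C : R, exists N0 : nat, forall n, (N0 <= n)%N -> maxprob n <= C * beta ^- n.
End Weighted.

(* Main.v *)
Require Import Defs.
From mathcomp Require Import all_boot all_order all_algebra.
From mathcomp Require Import boolp.
From mathcomp Require Import ring lra.
From mathcomp Require Import ring lra.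
Import Order.TTheory GRing.Theory Num.Theory.
Local Open Scope ring_scope.
Lemma sum_ffun_prod (R : realFieldType) (T : finType) (k : nat) (A : {set T}) (p : T -> R) :
  \sum_(s : {ffun 'I_k -> T} | [forall i, s i \in A]) \prod_(i < k) p (s i)
  = (\sum_(x in A) p x) ^+ k.
Proof.
rewrite -[k in RHS]card_ord -prodr_const bigA_distr_big; apply: eq_bigl => f.
by apply/ffun_onP/forallP.
Qed.

Lemma wword_gt0 (R : realFieldType) (Sig : finType) (om : Sig -> R)
  (om_pos : forall a, 0 < om a) n (w : n.-tuple Sig) : 0 < wword om w.
Proof. by rewrite /wword; apply: prodr_gt0 => a _. Qed.

Lemma EP1 (R : realFieldType) (Sig N : finType) (G : cfg Sig N)
    (om : Sig -> R) (om_pos : forall a, 0 < om a) n k :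
  EP G om n k = \sum_(w in Lang G n) prob G om w * (1 - (1 - prob G om w) ^+ k).
Proof.
rewrite /EP /covered.
under eq_bigr => s _ do rewrite big_mkcondr /= big_distrr /=.
rewrite exchange_big /=; apply: eq_bigr => w wL.
have Zpos : 0 < Zw G om n.
  rewrite /Zw (bigD1 w) //= ltr_pwDl ?wword_gt0 //.
  by apply: sumr_ge0 => x _; apply/ltW/wword_gt0.
have S1 : \sum_(x in Lang G n) prob G om x = 1.
  by rewrite /prob -mulr_suml divff // gt_eqF.
have S2 : \sum_(x in Lang G n :\ w) prob G om x = 1 - prob G om w.
  rewrite -S1 [in RHS](bigD1 w) //= addrAC subrr add0r; apply: eq_bigl => x.
  by rewrite in_setD1 andbC.
transitivity (prob G om w *
  \sum_(s : {ffun 'I_k -> n.-tuple Sig} | [forall i, s i \in Lang G n] && [exists i, s i == w])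
     \prod_(i < k) prob G om (s i)).
  rewrite big_distrr /= [RHS]big_mkcondr /=; apply: eq_bigr => s _.
  by case: ifP => _; rewrite ?mulr1 ?mulr0 // mulrC.
congr (_ * _).
have -> : 1 - (1 - prob G om w) ^+ k =
  (\sum_(x in Lang G n) prob G om x) ^+ k - (\sum_(x in Lang G n :\ w) prob G om x) ^+ k.
  by rewrite S1 S2 expr1n.
rewrite -!sum_ffun_prod.
rewrite [X in _ = X - _](bigID (fun s : {ffun 'I_k -> n.-tuple Sig} => [exists i, s i == w])) /=.
rewrite [X in _ = _ + X - _](eq_bigl (fun s : {ffun 'I_k -> n.-tuple Sig} => [forall i, s i \in Lang G n :\ w])) ?addrK // => s.
apply/idP/forallP.
  case/andP => /forallP H /existsP Hn i; rewrite in_setD1 H andbT.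
  by apply/negP => /eqP E; apply: Hn; exists i; rewrite E.
move=> H; apply/andP; split.
  by apply/forallP => i; have := H i; rewrite in_setD1 => /andP[].
apply/existsP => -[i /eqP E]; have := H i; by rewrite in_setD1 E eqxx.
Qed.

Lemma group_sum (R : realFieldType) (Sig N : finType) (G : cfg Sig N)
    (om : Sig -> R) n (g : R -> R) :
  \sum_(w in Lang G n) g (wword om w) =
  \sum_(i < size (Wvec G om n)) (Mcount G om n i)%:R * g (nth 0 (Wvec G om n) i).
Proof.
set c := fun x => #|[set w in Lang G n | wword om w == x]|.
rewrite [RHS](_ : _ = \sum_(0 <= i < size (Wvec G om n)) (c (nth 0 (Wvec G om n) i))%:R * g (nth 0 (Wvec G om n) i)); last first.
  by rewrite big_mkord.
rewrite -(big_nth 0 xpredT (fun x => (c x)%:R * g x)).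
rewrite /Wvec (perm_big _ (permEl (perm_sort _ _))) /=.
set u := undup _.
have uu : uniq u by apply: undup_uniq.
transitivity (\sum_(x <- u) \sum_(w in Lang G n | wword om w == x) g (wword om w)); last first.
  apply: eq_bigr => x _; rewrite mulr_natl -sumr_const /c.
  by apply: eq_big => [w|w]; rewrite inE // => /andP[_ /eqP ->].
under [RHS]eq_bigr => x _ do rewrite big_mkcondr /=.
rewrite exchange_big /=; apply: eq_bigr => w wL.
rewrite -big_mkcond /= -big_filter.
have -> : [seq i <- u | wword om w == i] = [:: wword om w].
  rewrite (eq_filter (a2 := pred1 (wword om w))); last by move=> x; rewrite /= eq_sym.
  apply: filter_pred1_uniq => //.
  by rewrite mem_undup; apply/mapP; exists w; rewrite ?mem_enum.
by rewrite big_seq1.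
Qed.
Lemma bern (R : realFieldType) (p : R) k : 0 <= p -> p <= 1 ->
  1 - k%:R * p <= (1 - p) ^+ k /\ (1 - p) ^+ k <= 1 - k%:R * p + (k%:R * p) ^+ 2.
Proof.
move=> p0 p1; elim: k => [|k [IH1 IH2]].
  by rewrite expr0 mul0r subr0 expr0n /= addr0 lexx.
have K0 : 0 <= k%:R :> R by rewrite ler0n.
rewrite exprS -natr1.
set X := (1 - p) ^+ k in IH1 IH2 *.
have h1 : 0 <= (1 - p) * (X - (1 - k%:R * p)) by apply: mulr_ge0; rewrite subr_ge0.
have h2 : 0 <= (1 - p) * ((1 - k%:R * p + (k%:R * p) ^+ 2) - X) by apply: mulr_ge0; rewrite subr_ge0.
have h3 := mulr_ge0 (mulr_ge0 (mulr_ge0 K0 K0) (mulr_ge0 p0 p0)) p0.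
have h4 := mulr_ge0 (mulr_ge0 K0 p0) p0.
split; nra.
Qed.

Section S.
Variables (R : realFieldType) (Sig N : finType) (G : cfg Sig N)
    (om : Sig -> R) (om_pos : forall a, 0 < om a).

Lemma wword_gt0' n (w : n.-tuple Sig) : 0 < wword om w.
Proof. by rewrite /wword; apply: prodr_gt0 => a _. Qed.

Lemma prob_bounds {n} {w : n.-tuple Sig} : w \in Lang G n ->
  0 < prob G om w /\ prob G om w <= 1 /\ prob G om w <= maxprob G om n.
Proof.
move=> wL.
have rest : 0 <= \sum_(x in Lang G n | x != w) wword om x.
  by apply: sumr_ge0 => x _; apply/ltW/wword_gt0'.
have Zeq : Zw G om n = wword om w + \sum_(x in Lang G n | x != w) wword om x.
  by rewrite /Zw (bigD1 w).
have Zpos : 0 < Zw G om n by rewrite Zeq ltr_pwDl ?wword_gt0'.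
have wp := wword_gt0' n w.
split; first by rewrite /prob divr_gt0.
split; first by rewrite /prob ler_pdivrMr // mul1r Zeq lerDl.
by rewrite /maxprob; apply: (le_bigmax_cond _ (P := fun x => x \in Lang G n)).
Qed.

Lemma maxprob_ge0 n : 0 <= maxprob G om n.
Proof.
rewrite /maxprob; elim/big_ind: _ => //.
  by move=> x y hx hy; rewrite le_max hx.
move=> w wL; have [h _] := prob_bounds wL; exact: ltW.
Qed.

Lemma EP_alpha n k : `|EP G om n k - k%:R * alpha2 G om n| <=
   k%:R ^+ 2 * maxprob G om n * alpha2 G om n.
Proof.
rewrite EP1 // /alpha2 mulr_sumr mulr_sumr -sumrB.
apply: le_trans (ler_norm_sum _ _ _) _.
apply: ler_sum => w wL.
have [p0 [p1 pm]] := prob_bounds wL.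
set p := prob G om w in p0 p1 pm *; set m := maxprob G om n in pm *.
have [b1 b2] := @bern R p k (ltW p0) p1.
set X := (1 - p) ^+ k in b1 b2 *.
have K0 : 0 <= k%:R :> R by rewrite ler0n.
rewrite ler_norml; apply/andP; split.
  have h : 0 <= p * (X - (1 - k%:R * p)) by rewrite mulr_ge0 ?subr_ge0 // ltW.
  have h2 : 0 <= (k%:R ^+ 2 * p ^+ 2) * (m - p) by rewrite mulr_ge0 ?subr_ge0 // mulr_ge0 // exprn_ge0 // ltW.
  nra.
have h : 0 <= p * ((1 - k%:R * p + (k%:R * p) ^+ 2) - X) by rewrite mulr_ge0 ?subr_ge0 // ltW.
have h2 : 0 <= (k%:R ^+ 2 * p ^+ 2) * (m - p) by rewrite mulr_ge0 ?subr_ge0 // mulr_ge0 // exprn_ge0 // ltW.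
have h3 : 0 <= (k%:R ^+ 2 * p ^+ 2) * m.
  apply: mulr_ge0; last exact: (le_trans (ltW p0) pm).
  by rewrite mulr_ge0 ?exprn_ge0 // ltW.
nra.
Qed.
End S.

Lemma alpha2_ge0 (R : realFieldType) (Sig N : finType) (G : cfg Sig N)
    (om : Sig -> R) n : 0 <= alpha2 G om n.
Proof. by apply: sumr_ge0 => w _; apply: sqr_ge0. Qed.

Lemma EP_zero (R : realFieldType) (Sig N : finType) (G : cfg Sig N)
    (om : Sig -> R) (om_pos : forall a, 0 < om a) n k :
  (k%:R * alpha2 G om n = 0) -> EP G om n k = 0.
Proof.
move/eqP; rewrite mulf_eq0 pnatr_eq0 => /orP[/eqP k0|/eqP a0].
  by rewrite EP1 // k0; apply: big1 => w _; rewrite expr0 subrr mulr0.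
rewrite EP1 //; apply: big1 => w wL; exfalso.
have [p0 _] := prob_bounds _ _ _ G _ om_pos wL.
have : 0 < alpha2 G om n.
  rewrite /alpha2 (bigD1 w) //= ltr_pwDl ?exprn_gt0 //.
  by apply: sumr_ge0 => x _; apply: sqr_ge0.
by rewrite a0 ltxx.
Qed.

Lemma bound_aux (R : realFieldType) (K m C B Bt : R) :
  0 <= K -> 0 <= m -> 0 < B -> 0 < Bt -> B * B <= Bt -> K <= B -> m <= C / Bt ->
  K * m <= C / B.
Proof.
move=> K0 m0 B0 Bt0 BB KB mC.
have C0 : 0 <= C by have := le_trans m0 mC; rewrite pmulr_lge0 // invr_gt0.
have e1 : K * m <= B * (C / Bt) by apply: ler_pM.
apply: le_trans e1 _.
rewrite -subr_ge0.
have -> : C / B - B * (C / Bt) = C * (Bt - B * B) / (B * Bt).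
  by field; rewrite ?gt_eqF.
by rewrite divr_ge0 ?mulr_ge0 ?subr_ge0 // ltW.
Qed.

Theorem theorem4 (R : realFieldType) (Sig N : finType) (G : cfg Sig N)
    (om : Sig -> R) (om_pos : forall a, 0 < om a) (G_unamb : unambiguous G) :
  (forall n k : nat,
     EP G om n k =
     \sum_(i < size (Wvec G om n))
        (Mcount G om n i)%:R * (nth 0 (Wvec G om n) i / Zw G om n) *
        (1 - (1 - nth 0 (Wvec G om n) i / Zw G om n) ^+ k))
  /\
  (condC1 G om ->
   exists beta : R, 1 < beta /\
     forall k : nat -> nat,
       (* k in o(beta^n) *)
       (forall eps : R, 0 < eps ->
          exists N0 : nat, forall n, (N0 <= n)%N -> (k n)%:R <= eps * beta ^+ n) ->
       (* E[P] = k alpha_2 (1 + O(beta^-n)) *)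
       exists (h : nat -> R) (C : R) (N0 : nat),
         forall n, (N0 <= n)%N ->
           `|h n| <= C * beta ^- n /\
           EP G om n (k n) = (k n)%:R * alpha2 G om n * (1 + h n)).
Proof.
split.
  move=> n k; rewrite EP1 //.
  rewrite (group_sum _ _ _ G om n (fun x => x / Zw G om n * (1 - (1 - x / Zw G om n) ^+ k))).
  by apply: eq_bigr => i _; rewrite mulrA.
move=> [be [be1 [C [N0 HC]]]].
set x := (be - 1) / (be + 2).
have be2 : 0 < be + 2 by lra.
have x0 : 0 < x by rewrite divr_gt0 // subr_gt0.
have xe : x * (be + 2) = be - 1 by rewrite /x divfK // gt_eqF.
set b := 1 + x.
have b1 : 1 < b by rewrite /b ltrDl.
have b0 : 0 < b by lra.
have bb : b * b <= be by rewrite /b; nra.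
exists b; split => // k Hk.
have [N1 HN1] := Hk 1 ltr01.
exists (fun n => if (k n)%:R * alpha2 G om n == 0 then 0
                 else EP G om n (k n) / ((k n)%:R * alpha2 G om n) - 1).
exists `|C|, (maxn N0 N1) => n; rewrite geq_max => /andP[n0 n1].
have Hm : maxprob G om n <= `|C| / be ^+ n.
  apply: (le_trans (HC n n0)); apply: ler_wpM2r; first by rewrite invr_ge0 exprn_ge0 // ltW // (lt_trans ltr01).
  exact: ler_norm.
have Hkn : (k n)%:R <= b ^+ n by rewrite -[b ^+ n]mul1r; apply: HN1.
have bound : (k n)%:R * maxprob G om n <= `|C| / b ^+ n.
  apply: bound_aux Hm => //; rewrite ?ler0n ?maxprob_ge0 ?exprn_gt0 //.
    by rewrite (lt_trans ltr01).
  by rewrite -exprMn lerXn2r // nnegrE ?mulr_ge0 ?ltW // (lt_trans ltr01).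
case: eqP => [E0|NE].
  split; first by rewrite normr0 mulr_ge0 // invr_ge0 exprn_ge0 // ltW.
  by rewrite addr0 mulr1 E0; apply: EP_zero.
have Ka : 0 < (k n)%:R * alpha2 G om n.
  by rewrite lt_def; apply/andP; split; [apply/eqP|rewrite mulr_ge0 ?ler0n ?alpha2_ge0].
split; last first.
  by rewrite addrC subrK mulrC divfK // gt_eqF.
have -> : EP G om n (k n) / ((k n)%:R * alpha2 G om n) - 1 =
   (EP G om n (k n) - (k n)%:R * alpha2 G om n) / ((k n)%:R * alpha2 G om n).
  by rewrite mulrBl divff // gt_eqF.
rewrite normrM normfV (gtr0_norm Ka) ler_pdivrMr //.
apply: le_trans (EP_alpha _ _ _ _ _ om_pos n (k n)) _.
apply: le_trans (_ : `|C| / b ^+ n * ((k n)%:R * alpha2 G om n) <= _); last by [].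
have -> : (k n)%:R ^+ 2 * maxprob G om n * alpha2 G om n =
   ((k n)%:R * maxprob G om n) * ((k n)%:R * alpha2 G om n) by ring.
by apply: ler_wpM2r => //; apply: ltW.
Qed.
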